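(* Let $P$ be a finite poset. Then $P$ is a forest with duplications if and only if every vertex of the graph $\Gamma(P)$ has degree at most one, i.e. $\Gamma(P)$ is a disjoint union of isolated edges and isolated vertices.
   Context: A (lower) order ideal of $P$ is a subset $J$ with $y\in J$, $x\preceq y$ implying $x\in J$; it is a connected order ideal if it is nonempty and its Hasse diagram is connected. Two order ideals $J_1,J_2$ intersect non-trivially if $J_1\cap J_2\neq\emptyset$ and neither of $J_1,J_2$ contains the other. The graph $\Gamma(P)$ has as vertex set the connected order ideals of $P$, with an edge between two of them exactly when they intersect non-trivially. Forests with duplications are the finite posets obtainable from one-element posets by repeated application of the following operations: (i) Disjoint union: for posets $P,Q$, take the disjoint union of the sets and of the relations, giving $P\oplus Q$. (ii) Hanging: for posets $P,Q$ and an element $a\in P$, on the disjoint union of $P$ and $Q$ add the relations $q\prec a$ for every $q\in Q$ and close transitively, giving $P\,^aQ$. (iii) Duplication: given a poset of the form $P=Q_1\,^a\,Q_2$ (obtained by hanging $Q_2$ below $a\in Q_1$) where $a$ is a minimal element of $Q_1$, add a new element $a'$ with relations $q\preceq a'$ for all $q\in Q_2$ and $a'\preceq q$ for all $q\in Q_1$ with $q\succ a$ (closed transitively), giving $P^{(a)}$. *)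

(* Defs.v *)
From mathcomp Require Import all_boot.
Set Implicit Arguments. Unset Strict Implicit. Unset Printing Implicit Defensive.

Definition partial_order (T : finType) (r : rel T) : Prop :=
  [/\ reflexive r, antisymmetric r & transitive r].

Definition dunion_rel (T1 T2 : finType) (r1 : rel T1) (r2 : rel T2)
  : rel (T1 + T2)%type :=
  fun x y => match x, y with
             | inl x1, inl y1 => r1 x1 y1
             | inr x2, inr y2 => r2 x2 y2
             | _, _ => false
             end.

Definition hang_base (T1 T2 : finType) (r1 : rel T1) (r2 : rel T2) (a : T1)
  : rel (T1 + T2)%type :=
  fun x y => dunion_rel r1 r2 x y ||
             match x, y with
             | inr _, inl y1 => y1 == a
             | _, _ => false
             end.

Definition hang_rel (T1 T2 : finType) (r1 : rel T1) (r2 : rel T2) (a : T1)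
  : rel (T1 + T2)%type := connect (hang_base r1 r2 a).

(* (iii) duplication of a in Q1 ^a Q2: new element a' (= None) with
   q <= a' for q in Q2 and a' <= q for q in Q1 with q > a,
   closed transitively. *)
Definition dup_base (T1 T2 : finType) (r1 : rel T1) (r2 : rel T2) (a : T1)
  : rel (option (T1 + T2)) :=
  fun x y => match x, y with
             | Some x', Some y' => hang_rel r1 r2 a x' y'
             | Some (inr _), None => true
             | None, Some (inl q) => r1 a q && (q != a)
             | None, None => true
             | _, _ => false
             end.

Definition dup_rel (T1 T2 : finType) (r1 : rel T1) (r2 : rel T2) (a : T1)
  : rel (option (T1 + T2)) := connect (dup_base r1 r2 a).

Definition minimal_in (T : finType) (r : rel T) (a : T) : Prop :=
  forall x, r x a -> x = a.

Inductive fwd : forall T : finType, rel T -> Prop :=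
| fwd_one : fwd (T := unit) (fun _ _ => true)
| fwd_iso (T T' : finType) (r : rel T) (r' : rel T') (f : T -> T') :
    fwd r -> bijective f -> (forall x y, r' (f x) (f y) = r x y) -> fwd r'
| fwd_union (T1 T2 : finType) (r1 : rel T1) (r2 : rel T2) :
    fwd r1 -> fwd r2 -> fwd (dunion_rel r1 r2)
| fwd_hang (T1 T2 : finType) (r1 : rel T1) (r2 : rel T2) (a : T1) :
    fwd r1 -> fwd r2 -> fwd (hang_rel r1 r2 a)
| fwd_dup (T1 T2 : finType) (r1 : rel T1) (r2 : rel T2) (a : T1) :
    fwd r1 -> fwd r2 -> minimal_in r1 a -> fwd (dup_rel r1 r2 a).

Definition order_ideal (T : finType) (r : rel T) (J : {set T}) : bool :=
  [forall x, forall y, (y \in J) && r x y ==> (x \in J)].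

Definition slt (T : finType) (r : rel T) (x y : T) : bool := r x y && (x != y).

Definition cover_in (T : finType) (r : rel T) (J : {set T}) : rel T :=
  fun x y => [&& x \in J, y \in J, slt r x y &
              [forall z, ~~ [&& z \in J, slt r x z & slt r z y]]].

Definition hasse_in (T : finType) (r : rel T) (J : {set T}) : rel T :=
  fun x y => cover_in r J x y || cover_in r J y x.

Definition conn_ideal (T : finType) (r : rel T) (J : {set T}) : bool :=
  [&& order_ideal r J, J != set0 &
      [forall x, forall y, (x \in J) && (y \in J) ==> connect (hasse_in r J) x y]].

Definition intersect_nontriv (T : finType) (J1 J2 : {set T}) : bool :=
  [&& J1 :&: J2 != set0, ~~ (J1 \subset J2) & ~~ (J2 \subset J1)].

Definition gamma_nbrs (T : finType) (r : rel T) (J : {set T}) : {set {set T}} :=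
  [set K | conn_ideal r K && intersect_nontriv J K].

(* Main.v *)
Require Import Defs.
From mathcomp Require Import all_boot.
Set Implicit Arguments. Unset Strict Implicit. Unset Printing Implicit Defensive.

Definition cmpin (T : finType) (r : rel T) (J : {set T}) : rel T :=
  fun x y => [&& x \in J, y \in J & r x y || r y x].

Definition cconn (T : finType) (r : rel T) (J : {set T}) : Prop :=
  forall x y, x \in J -> y \in J -> connect (cmpin r J) x y.

Definition cideal (T : finType) (r : rel T) (J : {set T}) : Prop :=
  [/\ order_ideal r J, J != set0 & cconn r J].

Lemma idealP (T : finType) (r : rel T) (J : {set T}) : order_ideal r J -> forall x y, y \in J -> r x y -> x \in J.
Proof. move=> /forallP H x y yJ rxy. by have /forallP/(_ y)/implyP := H x; apply; rewrite yJ. Qed.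

Lemma idealI (T : finType) (r : rel T) (J : {set T}) : (forall x y, y \in J -> r x y -> x \in J) -> order_ideal r J.
Proof. move=> H; apply/forallP=> x; apply/forallP=> y; apply/implyP=> /andP[]; exact: H. Qed.

Lemma cmpin_sym (T : finType) (r : rel T) (J : {set T}) : symmetric (cmpin r J).
Proof. move=> x y; rewrite /cmpin; by case: (x \in J); case: (y \in J); rewrite //= orbC. Qed.

Lemma chain_hasse (T : finType) (r : rel T) (J : {set T}) : partial_order r -> order_ideal r J ->
  forall n x y, #|[set z | r x z && r z y]| <= n -> y \in J -> r x y ->
  connect (hasse_in r J) x y.
Proof.
case=> rr ra rt idJ; elim=> [|n IH] x y.
  rewrite leqn0 => /eqP c yJ rxy.
  have: x \in [set z | r x z && r z y] by rewrite inE rr rxy.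
  by rewrite (cards0_eq c) inE.
move=> c yJ rxy.
have xJ : x \in J := idealP idJ yJ rxy.
case: (boolP [exists z, [&& z \in J, slt r x z & slt r z y]]).
  case/existsP=> z /and3P[zJ /andP[rxz nxz] /andP[rzy nzy]].
  have p1 : [set w | r x w && r w z] \proper [set w | r x w && r w y].
    apply/properP; split.
      apply/subsetP=> w; rewrite !inE => /andP[-> rwz]; exact: (rt _ _ _ rwz rzy).
    exists y; first by rewrite !inE rxy rr.
    rewrite inE; apply/negP => /andP[_ ryz].
    by move: nzy; rewrite (ra z y) ?rzy ?ryz ?eqxx.
  have p2 : [set w | r z w && r w y] \proper [set w | r x w && r w y].
    apply/properP; split.
      apply/subsetP=> w; rewrite !inE => /andP[rzw ->]; rewrite andbT; exact: (rt _ _ _ rxz rzw).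
    exists x; first by rewrite !inE rxy rr.
    rewrite inE; apply/negP => /andP[rzx _].
    by move: nxz; rewrite (ra x z) ?rzx ?rxz ?eqxx.
  apply: (connect_trans (y := z)).
    apply: IH => //; rewrite -ltnS; exact: leq_trans (proper_card p1) c.
  apply: IH => //; rewrite -ltnS; exact: leq_trans (proper_card p2) c.
rewrite negb_exists => H.
case: (eqVneq x y) => [-> //|nxy].
apply: connect1; apply/orP; left; rewrite /cover_in xJ yJ /slt rxy nxy /=.
exact: H.
Qed.

Lemma hasse_sym (T : finType) (r : rel T) (J : {set T}) : symmetric (hasse_in r J).
Proof. by move=> x y; rewrite /hasse_in orbC. Qed.

Lemma conn_idealE (T : finType) (r : rel T) (J : {set T}) : partial_order r -> conn_ideal r J <-> cideal r J.
Proof.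
move=> po; split.
  case/and3P=> id n0 /forallP c; split=> // x y xJ yJ.
  have /forallP/(_ y)/implyP := c x; rewrite xJ yJ => /(_ isT).
  apply: connect_sub => u v /orP[] /and4P[uJ vJ /andP[ruv _] _]; apply: connect1;
    by rewrite /cmpin uJ vJ ruv ?orbT.
case=> id n0 c; apply/and3P; split=> //; apply/forallP=> x; apply/forallP=> y.
apply/implyP=> /andP[xJ yJ]; move: (c x y xJ yJ).
apply: connect_sub => u v /and3P[uJ vJ /orP[] ruv].
  exact: (chain_hasse po id (leqnn _) vJ ruv).
rewrite (sym_connect_sym (@hasse_sym _ r J)).
exact: (chain_hasse po id (leqnn _) uJ ruv).
Qed.

Definition nb (T : finType) (r : rel T) (J K : {set T}) := cideal r K /\ intersect_nontriv J K.
Definition good (T : finType) (r : rel T) :=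
  forall J K1 K2, cideal r J -> nb r J K1 -> nb r J K2 -> K1 = K2.

Lemma goodE (T : finType) (r : rel T) : partial_order r ->
  good r <-> (forall J, conn_ideal r J -> #|gamma_nbrs r J| <= 1).
Proof.
move=> po; split.
  move=> g J /(conn_idealE _ po) cJ; apply/card_le1_eqP => K1 K2.
  rewrite !inE => /andP[/(conn_idealE _ po) c1 i1] /andP[/(conn_idealE _ po) c2 i2].
  exact: (g J).
move=> H J K1 K2 /(conn_idealE _ po) cJ [c1 i1] [c2 i2].
have /card_le1_eqP := H J cJ; apply; rewrite inE; apply/andP; split => //; exact/(conn_idealE _ po).
Qed.

Lemma int_sym (T : finType) (J K : {set T}) : intersect_nontriv J K = intersect_nontriv K J.
Proof. rewrite /intersect_nontriv setIC; by case: (_ \subset _); case: (_ \subset _); rewrite ?andbF. Qed.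

Lemma connect_map (T T' : finType) (e : rel T) (e' : rel T') (f : T -> T') :
  (forall u v, e u v -> e' (f u) (f v)) -> forall x y, connect e x y -> connect e' (f x) (f y).
Proof.
move=> H x y /connectP[p]; elim: p x => [|z p IH] x /=; first by move=> _ ->.
case/andP=> exz pz ly. exact: connect_trans (connect1 (H _ _ exz)) (IH _ pz ly).
Qed.

Lemma closed_in (T : finType) (r : rel T) (K : {set T}) (A : {set T}) x :
  cconn r K -> x \in K -> x \in A ->
  (forall u v, u \in K -> v \in K -> r u v || r v u -> u \in A -> v \in A) ->
  forall y, y \in K -> y \in A.
Proof.
move=> cK xK Ax H y yK.
have cl : closed (cmpin r K) (mem A).
  apply: intro_closed; first exact: sym_connect_sym (@cmpin_sym _ _ _).
  move=> u v /and3P[uK vK ruv]; exact: H.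
by rewrite -(closed_connect cl (cK _ _ xK yK)).
Qed.

Lemma PL (T T1 : finType) (r : rel T) (r1 : rel T1) (e : T1 -> T) (p : T -> T1) (K : {set T}) :
  (forall x y, r (e x) (e y) = r1 x y) ->
  (forall u v, u \in K -> v \in K -> r u v -> r1 (p u) (p v)) ->
  (forall u, u \in K -> e (p u) \in K) ->
  (forall x, p (e x) = x) ->
  cideal r K -> cideal r1 (e @^-1: K).
Proof.
move=> re mono inK pe [id n0 c]; split.
- apply: idealI => x y; rewrite !inE => yK rxy; apply: (idealP id yK); by rewrite re.
- case/set0Pn: n0 => u uK; apply/set0Pn; exists (p u); rewrite inE; exact: inK.
- move=> x y; rewrite !inE => xK yK; rewrite -(pe x) -(pe y).
  apply: (connect_map (f := p)) (c _ _ xK yK) => u v /and3P[uK vK /orP[] ruv].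
    by rewrite /cmpin !inE (inK u uK) (inK v vK) /= (mono _ _ uK vK ruv).
  by rewrite /cmpin !inE (inK u uK) (inK v vK) /= (mono _ _ vK uK ruv) orbT.
Qed.

Lemma GEN (T T1 : finType) (r : rel T) (r1 : rel T1) (e : T1 -> T) (p : T -> T1)
    (c : {set T}) (J : {set T}) :
  (forall x y, r (e x) (e y) = r1 x y) -> (forall x, p (e x) = x) -> good r1 ->
  (forall K, K = J \/ nb r J K ->
     (forall u v, u \in K -> v \in K -> r u v -> r1 (p u) (p v)) /\
     (forall x, (x \in K) = (e (p x) \in K) && (x \in c))) ->
  cideal r J -> forall K1 K2, nb r J K1 -> nb r J K2 -> K1 = K2.
Proof.
move=> re pe g ok cJ.
have inK (K : {set T}) u : (forall x, (x \in K) = (e (p x) \in K) && (x \in c)) -> u \in K -> e (p u) \in K.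
  by move=> H; rewrite H => /andP[].
have ciK (K : {set T}) : K = J \/ nb r J K -> cideal r K -> cideal r1 (e @^-1: K).
  move=> o; case: (ok K o) => mono memK; apply: (PL re mono _ pe) => u; exact: (inK K u memK).
have nsub (A B : {set T}) : (forall x, (x \in A) = (e (p x) \in A) && (x \in c)) ->
    (forall x, (x \in B) = (e (p x) \in B) && (x \in c)) ->
    ~~ (A \subset B) -> ~~ (e @^-1: A \subset e @^-1: B).
  move=> hA hB /subsetPn[x xA xB]; apply/subsetPn; exists (p x); rewrite inE; first exact: inK xA.
  by move: xB; rewrite hB; move: xA; rewrite hA => /andP[_ ->]; rewrite andbT.
have tr (K : {set T}) : nb r J K -> nb r1 (e @^-1: J) (e @^-1: K).
  move=> [cK iK]; split; first exact: ciK (or_intror (conj cK iK)) cK.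
  case: (ok J (or_introl erefl)) => _ hJ; case: (ok K (or_intror (conj cK iK))) => _ hK.
  case/and3P: iK => /set0Pn[x]; rewrite inE => /andP[xJ xK] nJK nKJ; apply/and3P; split.
  - apply/set0Pn; exists (p x); by rewrite !inE (inK _ _ hJ xJ) (inK _ _ hK xK).
  - exact: nsub.
  - exact: nsub.
move=> K1 K2 n1 n2.
have e12 := g _ _ _ (ciK J (or_introl erefl) cJ) (tr _ n1) (tr _ n2).
case: (ok K1 (or_intror n1)) => _ h1; case: (ok K2 (or_intror n2)) => _ h2.
apply/setP=> x; rewrite h1 h2; congr (_ && _).
by have /setP/(_ (p x)) := e12; rewrite !inE.
Qed.

Lemma GEN2 (T T1 : finType) (r : rel T) (r1 : rel T1) (e : T1 -> T)
    (Psi : {set T1} -> {set T}) :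
  (forall K, e @^-1: Psi K = K) -> (forall K, cideal r1 K -> cideal r (Psi K)) ->
  good r -> good r1.
Proof.
move=> pre ci g J K1 K2 cJ [c1 i1] [c2 i2].
have mem (A : {set T1}) x : (e x \in Psi A) = (x \in A) by rewrite -{2}(pre A) inE.
have tr (A B : {set T1}) : intersect_nontriv A B -> intersect_nontriv (Psi A) (Psi B).
  case/and3P=> /set0Pn[x]; rewrite inE => /andP[xA xB] nAB nBA; apply/and3P; split.
  - by apply/set0Pn; exists (e x); rewrite inE !mem xA xB.
  - case/subsetPn: nAB => y yA yB; apply/subsetPn; exists (e y); by rewrite mem.
  - case/subsetPn: nBA => y yA yB; apply/subsetPn; exists (e y); by rewrite mem.
have := g _ _ _ (ci _ cJ) (conj (ci _ c1) (tr _ _ i1)) (conj (ci _ c2) (tr _ _ i2)).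
by move=> E; rewrite -(pre K1) -(pre K2) E.
Qed.

Definition hangR (T1 T2 : finType) (r1 : rel T1) (r2 : rel T2) (a : T1) : rel (T1 + T2) :=
  fun x y => match x, y with
  | inl x, inl y => r1 x y
  | inr x, inr y => r2 x y
  | inr _, inl y => r1 a y
  | inl _, inr _ => false end.

Definition dupR (T1 T2 : finType) (r1 : rel T1) (r2 : rel T2) (a : T1)
  : rel (option (T1 + T2)) :=
  fun x y => match x, y with
  | Some x, Some y => hangR r1 r2 a x y
  | Some x, None => if x is inr _ then true else false
  | None, Some y => if y is inl q then r1 a q && (q != a) else false
  | None, None => true end.

Lemma connect_eqR (T : finType) (e R : rel T) : reflexive R -> transitive R -> subrel e R ->
  (forall x y, R x y -> connect e x y) -> connect e =2 R.
Proof.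
move=> rR tR sub H x y; apply/idP/idP; last exact: H.
case/connectP=> p; elim: p x => [|z p IH] x /=; first by move=> _ ->.
case/andP=> exz pz ly; exact: tR (sub _ _ exz) (IH _ pz ly).
Qed.

Lemma hangR_po (T1 T2 : finType) (r1 : rel T1) (r2 : rel T2) a :
  partial_order r1 -> partial_order r2 -> partial_order (hangR r1 r2 a).
Proof.
case=> rr1 ra1 rt1 [rr2 ra2 rt2]; split.
- by case=> x /=.
- move=> [x|x] [y|y] //=; first by move/ra1 ->.
  + by rewrite andbF.
  + by move/ra2 ->.
- move=> [y|y] [x|x] [z|z] //=; try exact: rt1; try exact: rt2.
Qed.

Lemma hang_relE (T1 T2 : finType) (r1 : rel T1) (r2 : rel T2) a :
  partial_order r1 -> partial_order r2 -> hang_rel r1 r2 a =2 hangR r1 r2 a.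
Proof.
move=> po1 po2; have [rr tr _] := po1; have [rR aR tR] := hangR_po a po1 po2.
apply: connect_eqR => //.
- move=> [x|x] [y|y]; rewrite /hang_base /= ?orbF //.
  by move/eqP ->; exact: rr.
- move=> [x|x] [y|y] //= h.
  + by apply: connect1; rewrite /hang_base /= h.
  + apply: (connect_trans (y := inl a)); apply: connect1; by rewrite /hang_base /= ?eqxx ?h ?orbT.
  + by apply: connect1; rewrite /hang_base /= h.
Qed.

Lemma dupR_po (T1 T2 : finType) (r1 : rel T1) (r2 : rel T2) a :
  partial_order r1 -> partial_order r2 -> partial_order (dupR r1 r2 a).
Proof.
move=> po1 po2; have [rr1 ra1 rt1] := po1; have [rr2 ra2 rt2] := po2.
have [rR aR tR] := hangR_po a po1 po2; split.
- case=> [[x|x]|] //=; by [apply: rr1 | apply: rr2].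
- move=> [[x|x]|] [[y|y]|] //=; rewrite ?andbF //.
  + by move/ra1 ->.
  + by move/ra2 ->.
- move=> [[y|y]|] [[x|x]|] [[z|z]|] //=; try exact: rt1; try exact: rt2.
  + move=> /andP[ray nya] ryz; apply/andP; split; first exact: rt1 ray ryz.
    apply/negP=> /eqP eza; move: nya; rewrite -eza in ray ryz *.
    by rewrite (ra1 y z) ?ray ?ryz ?eqxx.
  + by move=> _ /andP[].
Qed.

Lemma dup_relE (T1 T2 : finType) (r1 : rel T1) (r2 : rel T2) a :
  partial_order r1 -> partial_order r2 -> dup_rel r1 r2 a =2 dupR r1 r2 a.
Proof.
move=> po1 po2; have [rR aR tR] := dupR_po a po1 po2.
have hE := hang_relE a po1 po2.
apply: connect_eqR => //.
- by move=> [[x|x]|] [[y|y]|] //=; rewrite /dup_base hE.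
- move=> x y h; apply: connect1; move: h; by case: x => [[x|x]|]; case: y => [[y|y]|]; rewrite /dup_base ?hE.
Qed.

Lemma good_iso (T T' : finType) (r : rel T) (r' : rel T') (f : T -> T') :
  bijective f -> (forall x y, r' (f x) (f y) = r x y) -> good r -> good r'.
Proof.
case=> g fg gf re gr J K1 K2 cJ; move: K1 K2.
apply: (GEN (c := setT) re fg gr _ cJ) => K _; split.
- by move=> u v _ _ ruv; rewrite -re !gf.
- by move=> x; rewrite gf inE andbT.
Qed.

Lemma po_iso (T T' : finType) (r : rel T) (r' : rel T') (f : T -> T') :
  bijective f -> (forall x y, r' (f x) (f y) = r x y) -> partial_order r -> partial_order r'.
Proof.
case=> g fg gf re [rr ra rt].
have re' u v : r' u v = r (g u) (g v) by rewrite -re !gf.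
split.
- by move=> u; rewrite re'.
- move=> u v; rewrite !re' => /ra /(congr1 f); by rewrite !gf.
- move=> v u w; rewrite !re'; exact: rt.
Qed.

Lemma SIDE (T T1 : finType) (r : rel T) (r1 : rel T1) (e : T1 -> T) (p : T -> T1)
    (S : {set T}) (J : {set T}) :
  (forall x y, r (e x) (e y) = r1 x y) -> (forall x, p (e x) = x) ->
  (forall x, x \in S -> e (p x) = x) ->
  good r1 -> J \subset S -> (forall K, nb r J K -> K \subset S) -> cideal r J ->
  forall K1 K2, nb r J K1 -> nb r J K2 -> K1 = K2.
Proof.
move=> re pe eS g JS KS.
apply: (GEN (c := S) re pe g) => K o.
have /subsetP sK : K \subset S by case: o => [->|/KS].
split.
- move=> u v uK vK; by rewrite -(eS u (sK _ uK)) -(eS v (sK _ vK)) re !pe.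
- move=> x; case xS: (x \in S); first by rewrite eS ?andbT.
  by rewrite andbF; apply/negP => /sK; rewrite xS.
Qed.

Definition isl (T1 T2 : Type) (x : T1 + T2) : bool := if x is inl _ then true else false.

Lemma good_union (T1 T2 : finType) (r1 : rel T1) (r2 : rel T2) :
  good r1 -> good r2 -> good (dunion_rel r1 r2).
Proof.
move=> g1 g2 J K1 K2 cJ; move: K1 K2.
have side (K : {set T1 + T2}) x : cideal (dunion_rel r1 r2) K -> x \in K ->
    forall y, y \in K -> isl y = isl x.
  case=> _ _ cK xK y yK.
  have := @closed_in _ _ K [set z | isl z == isl x] x cK xK.
  rewrite inE eqxx => /(_ isT) H.
  suff: y \in [set z | isl z == isl x] by rewrite inE => /eqP.
  apply: H yK; by move=> [u|u] [v|v] _ _ //=; rewrite !inE.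
have sideJ (K : {set T1 + T2}) x : nb (dunion_rel r1 r2) J K -> x \in J ->
    forall y, y \in K -> isl y = isl x.
  case=> cK /and3P[/set0Pn[z] + _ _]; rewrite inE => /andP[zJ zK] xJ y yK.
  by rewrite (side K z cK zK y yK) (side J x cJ xJ z zJ).
have cJ' := cJ; case: cJ' => [iJ /set0Pn[[j0|j0] jJ] cJc].
- apply: (SIDE (e := inl) (p := fun x => if x is inl y then y else j0)
          (S := [set x | isl x]) _ _ _ g1 _ _ cJ) => //.
  + by move=> [x|x]; rewrite inE.
  + apply/subsetP=> x xJ; by rewrite inE (side J _ cJ jJ x xJ).
  + move=> K nK; apply/subsetP=> x xK; by rewrite inE (sideJ K _ nK jJ x xK).
- apply: (SIDE (e := inr) (p := fun x => if x is inr y then y else j0)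
          (S := [set x | ~~ isl x]) _ _ _ g2 _ _ cJ) => //.
  + by move=> [x|x]; rewrite inE.
  + apply/subsetP=> x xJ; by rewrite inE (side J _ cJ jJ x xJ).
  + move=> K nK; apply/subsetP=> x xK; by rewrite inE (sideJ K _ nK jJ x xK).
Qed.

Lemma good_hangR (T1 T2 : finType) (r1 : rel T1) (r2 : rel T2) (a : T1) :
  partial_order r1 -> partial_order r2 -> good r1 -> good r2 -> good (hangR r1 r2 a).
Proof.
move=> po1 po2 g1 g2; have [rr1 _ rt1] := po1.
have cross (K : {set T1 + T2}) p q : cideal (hangR r1 r2 a) K ->
    inl p \in K -> inr q \in K -> inl a \in K.
  case=> iK _ cK pK qK; case aK: (inl a \in K) => //.
  have := @closed_in _ _ K [set z | isl z] (inl p) cK pK.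
  rewrite inE => /(_ isT) Hc.
  have Hq : inr q \in [set z : T1 + T2 | isl z].
    apply: (Hc _ _ qK).
    move=> [u|u] [v|v] uK vK //=; rewrite ?inE //=.
    by move=> rau _; rewrite -aK (idealP iK (x := inl a) uK rau).
  by rewrite inE in Hq.
have down (K : {set T1 + T2}) q : order_ideal (hangR r1 r2 a) K -> inl a \in K -> inr q \in K.
  by move=> iK aK; apply: (idealP iK aK); exact: rr1.
move=> J K1 K2 cJ; move: K1 K2.
case: (boolP [exists p, inl p \in J]).
- case/existsP => j jJ.
  apply: (GEN (e := inl) (p := fun x => if x is inl y then y else a) (c := setT) _ _ g1 _ cJ) => //.
  move=> K o.
  have [cK [p pK]] : cideal (hangR r1 r2 a) K /\ exists p, inl p \in K.
    case: o => [->|[cK iK]]; first by split; [|exists j].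
    split => //; case: (boolP [exists p, inl p \in K]) => [/existsP //|].
    rewrite negb_exists => /forallP nK.
    case/and3P: iK => /set0Pn[[z|z]]; rewrite inE => /andP[zJ zK] _ nKJ.
      by have := nK z; rewrite zK.
    have aJ := cross J j z cJ jJ zJ.
    case/negP: nKJ; apply/subsetP=> [[x|x]] xK; first by have := nK x; rewrite xK.
    by case: cJ => iJ _ _; apply: down.
  split.
  + move=> [u|u] [v|v] _ _ //= _; exact: rr1.
  + move=> [x|x]; rewrite inE andbT //.
    apply/idP/idP => [xK|aK]; first exact: cross cK pK xK.
    by case: cK => iK _ _; apply: down.
- rewrite negb_exists => /forallP nJ.
  have [q0 q0J] : exists q, inr q \in J.
    case: cJ => _ /set0Pn[[z|z] zJ] _; last by exists z.
    by have := nJ z; rewrite zJ.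
  apply: (SIDE (e := inr) (p := fun x => if x is inr y then y else q0)
          (S := [set x | ~~ isl x]) _ _ _ g2 _ _ cJ) => //.
  + by move=> [x|x]; rewrite inE.
  + apply/subsetP=> [[x|x]] xJ; rewrite inE //.
    by have := nJ x; rewrite xJ.
  + move=> K [cK iK]; apply/subsetP=> [[p|x]] xK; rewrite inE //.
    case/and3P: iK => /set0Pn[[z|z]]; rewrite inE => /andP[zJ zK] nJK _.
      by have := nJ z; rewrite zJ.
    have aK := cross K p z cK xK zK.
    case/negP: nJK; apply/subsetP=> [[y|y]] yJ; first by have := nJ y; rewrite yJ.
    by case: cK => iK _ _; apply: down.
Qed.

Lemma good_dupR (T1 T2 : finType) (r1 : rel T1) (r2 : rel T2) (a : T1) :
  partial_order r1 -> partial_order r2 -> minimal_in r1 a ->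
  good (hangR r1 r2 a) -> good (dupR r1 r2 a).
Proof.
move=> po1 po2 mina gH; have [rr1 ra1 rt1] := po1.
pose T0 := [set x : option (T1 + T2) | (x == Some (inl a)) || (if x is Some (inr _) then true else false)].
pose T1s := [set x : option (T1 + T2) | if x is Some (inl _) then false else true].
pose Rs := [set x : option (T1 + T2) | if x is Some (inr _) then true else false].
have F1 K : cideal (dupR r1 r2 a) K -> None \in K -> Some (inl a) \notin K -> K = T1s.
  move=> [iK _ cK] nK naK; apply/setP => x; apply/idP/idP.
  - move=> xK; apply: (closed_in cK nK _ _ xK); first by rewrite inE.
    move=> [[u|u]|] [[v|v]|] uK vK //=; rewrite ?inE //=.
    + by rewrite orbF => rav _; move: naK; rewrite (idealP iK (x := Some (inl a)) vK rav).
    + by rewrite orbF => /andP[rav _] _; move: naK; rewrite (idealP iK (x := Some (inl a)) vK rav).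
  - rewrite inE; case: x => [[x|x]|] // _; exact: (idealP iK nK).
have F2 K : cideal (dupR r1 r2 a) K -> Some (inl a) \in K -> None \notin K -> K = T0.
  move=> [iK _ cK] aK nnK.
  have hA v : Some (inl v) \in K -> r1 a v -> v = a.
    move=> vK rav; case: (eqVneq v a) => // nva.
    have := idealP iK (x := None) vK; rewrite /= rav nva => /(_ isT) nK.
    by rewrite nK in nnK.
  apply/setP => x; apply/idP/idP.
  - move=> xK; apply: (closed_in cK aK _ _ xK); first by rewrite inE eqxx.
    move=> [[u|u]|] [[v|v]|] uK vK //=; rewrite ?inE //=.
    + move=> h /orP[/eqP[eua]|//]; subst u.
      by case/orP: h => h; [rewrite (hA v vK h) | rewrite (mina v h)]; rewrite eqxx.
    + by move=> /andP[_ nua] /orP[/eqP[eua]|//]; rewrite eua eqxx in nua.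
    + by rewrite orbF => rav _; rewrite (hA v vK rav) eqxx.
    + by move=> _ _; move: nnK; rewrite vK.
  - rewrite inE; case: x => [[x|x]|] //.
      by rewrite orbF => /eqP[->].
    move=> _; apply: (idealP iK aK); exact: rr1.
have L K d : cideal (dupR r1 r2 a) K -> None \notin K -> Some (inl a) \notin K ->
    Some (inr d) \in K -> K \subset Rs.
  move=> [iK _ cK] nnK naK dK; apply/subsetP => x xK.
  apply: (closed_in cK dK _ _ xK); first by rewrite inE.
  move=> [[u|u]|] [[v|v]|] uK vK //=; rewrite ?inE //=.
  + by rewrite orbF => rav _; move: naK; rewrite (idealP iK (x := Some (inl a)) vK rav).
  + by move=> _ _; move: nnK; rewrite vK.
have N0 K : cideal (dupR r1 r2 a) K -> intersect_nontriv T0 K -> K = T1s.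
  move=> cK; have [iK _ _] := cK; case/and3P=> /set0Pn[z]; rewrite inE => /andP[zT zK] nTK nKT.
  have naK : Some (inl a) \notin K.
    apply/negP=> aK; case/negP: nTK; apply/subsetP=> x; rewrite inE.
    case: x => [[x|x]|] //; first by rewrite orbF => /eqP[->].
    move=> _; apply: (idealP iK aK); exact: rr1.
  case nK: (None \in K); first exact: F1.
  move: zT zK; rewrite inE; case: z => [[z|z]|] //.
    by rewrite orbF => /eqP[->] aK; rewrite aK in naK.
  move=> _ zK; case/negP: nKT; apply: subset_trans (L K z cK _ naK zK) _; first by rewrite nK.
  by apply/subsetP=> x; rewrite !inE; case: x => [[x|x]|]; rewrite ?orbT.
have N1 K : cideal (dupR r1 r2 a) K -> intersect_nontriv T1s K -> K = T0.
  move=> cK; have [iK _ _] := cK; case/and3P=> /set0Pn[z]; rewrite inE => /andP[zT zK] nTK nKT.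
  have nnK : None \notin K.
    apply/negP=> nK; case/negP: nTK; apply/subsetP=> x; rewrite inE.
    case: x => [[x|x]|] // _; exact: (idealP iK nK).
  case aK: (Some (inl a) \in K); first exact: F2.
  move: zT zK; rewrite inE; case: z => [[z|z]|] //.
    move=> _ zK; case/negP: nKT; apply: subset_trans (L K z cK nnK _ zK) _; first by rewrite aK.
    by apply/subsetP=> x; rewrite !inE; case: x => [[x|x]|].
  by move=> _ nK; rewrite nK in nnK.
have gen J : cideal (dupR r1 r2 a) J -> (Some (inl a) \in J) = (None \in J) ->
    forall K1 K2, nb (dupR r1 r2 a) J K1 -> nb (dupR r1 r2 a) J K2 -> K1 = K2.
  move=> cJ eJ.
  apply: (GEN (e := Some) (p := fun x => if x is Some y then y else inl a) (c := setT) _ _ gH _ cJ) => //.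
  move=> K o; split.
  - move=> [[u|u]|] [[v|v]|] _ _ //=; try by move=> _; exact: rr1.
    by case/andP.
  - case=> [x|]; rewrite inE andbT //.
    case: o => [->|[cK iK]]; first by rewrite eJ.
    have iJ : intersect_nontriv K J by rewrite int_sym.
    case aK: (Some (inl a) \in K); case nK: (None \in K) => //.
    + have E := F2 K cK aK (negbT nK); rewrite E in iJ.
      have := N0 J cJ iJ => EJ; move: eJ; by rewrite EJ !inE.
    + have E := F1 K cK nK (negbT aK); rewrite E in iJ.
      have := N1 J cJ iJ => EJ; move: eJ; by rewrite EJ !inE eqxx.
move=> J K1 K2 cJ.
case aJ: (Some (inl a) \in J); case nJ: (None \in J).
- by apply: gen; rewrite ?aJ ?nJ.
- have E := F2 J cJ aJ (negbT nJ); rewrite E => [[c1 i1] [c2 i2]].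
  by rewrite (N0 _ c1 i1) (N0 _ c2 i2).
- have E := F1 J cJ nJ (negbT aJ); rewrite E => [[c1 i1] [c2 i2]].
  by rewrite (N1 _ c1 i1) (N1 _ c2 i2).
- by apply: gen; rewrite ?aJ ?nJ.
Qed.

Lemma dunion_po (T1 T2 : finType) (r1 : rel T1) (r2 : rel T2) :
  partial_order r1 -> partial_order r2 -> partial_order (dunion_rel r1 r2).
Proof.
case=> rr1 ra1 rt1 [rr2 ra2 rt2]; split.
- by case=> x /=.
- move=> [x|x] [y|y] //=; [by move/ra1 -> | by move/ra2 ->].
- move=> [y|y] [x|x] [z|z] //=; [exact: rt1 | exact: rt2].
Qed.

Lemma id_iso (T : finType) (r r' : rel T) : r' =2 r -> 
  bijective (@id T) /\ (forall x y, r' (id x) (id y) = r x y).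
Proof. by move=> E; split; [exists id | ]. Qed.

Lemma fwd_good (T : finType) (r : rel T) : fwd r -> [/\ partial_order r, good r & 0 < #|T|].
Proof.
elim=> {T r}.
- split; last by rewrite card_unit.
  + by split => // [[] []].
  + move=> J K1 K2 [_ nJ _] [[_ nK _] /and3P[_ nJK _]].
    case/negP: nJK; apply/subsetP=> x _; case/set0Pn: nK => y; by case: x; case: y.
- move=> T T' r r' f _ [po g n] bij re; split.
  + exact: po_iso bij re po.
  + exact (good_iso bij re g).
  + by move: n; rewrite (bij_eq_card bij).
- move=> T1 T2 r1 r2 _ [po1 g1 n1] _ [po2 g2 n2]; split.
  + exact: dunion_po.
  + exact (good_union g1 g2).
  + by rewrite card_sum addn_gt0 n1.
- move=> T1 T2 r1 r2 a _ [po1 g1 n1] _ [po2 g2 n2].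
  have [b e] := id_iso (hang_relE a po1 po2); split.
  + exact: po_iso b e (hangR_po a po1 po2).
  + exact (good_iso b e (good_hangR (a := a) po1 po2 g1 g2)).
  + by rewrite card_sum addn_gt0 n1.
- move=> T1 T2 r1 r2 a _ [po1 g1 n1] _ [po2 g2 n2] mina.
  have [b e] := id_iso (dup_relE a po1 po2); split.
  + exact: po_iso b e (dupR_po a po1 po2).
  + exact (good_iso b e (good_dupR po1 po2 mina (good_hangR (a := a) po1 po2 g1 g2))).
  + by rewrite card_option.
Qed.

Definition subr (T : finType) (r : rel T) (S : {set T}) : rel {x : T | x \in S} :=
  fun x y => r (val x) (val y).
Arguments subr {T} r S.

Lemma subr_po (T : finType) (r : rel T) (S : {set T}) :
  partial_order r -> partial_order (subr r S).
Proof.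
case=> rr ra rt; split.
- by move=> x; exact: rr.
- by move=> x y /ra /val_inj.
- by move=> y x z; exact: rt.
Qed.

Lemma card_subS (T : finType) (S : {set T}) : #|{: {x : T | x \in S}}| = #|S|.
Proof. by rewrite card_sig. Qed.

Lemma preim_im (T : finType) (S : {set T}) (K : {set {x : T | x \in S}}) :
  val @^-1: (val @: K) = K.
Proof. by apply/setP=> x; rewrite inE mem_imset //; exact: val_inj. Qed.

Lemma good_sub_down (T : finType) (r : rel T) (S : {set T}) :
  partial_order r -> order_ideal r S -> good r -> good (subr r S).
Proof.
move=> po iS g.
apply: (GEN2 (e := val) (Psi := fun K => val @: K)) g => [K|K [iK nK cK]].
  exact: preim_im.
split.
- apply: idealI => x y /imsetP[y' y'K ->] rxy.
  have xS : x \in S := idealP iS (valP y') rxy.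
  have -> : x = val (Sub x xS : {x : T | x \in S}) by [].
  rewrite mem_imset; last exact: val_inj.
  exact: (idealP iK y'K).
- case/set0Pn: nK => x xK; apply/set0Pn; exists (val x); exact: imset_f.
- move=> u v /imsetP[u' u'K ->] /imsetP[v' v'K ->].
  apply: (connect_map (f := val)) (cK _ _ u'K v'K) => x y /and3P[xK yK rxy].
  by rewrite /cmpin !imset_f.
Qed.

Lemma good_sub_pend (T : finType) (r : rel T) (Q : {set T}) (aS : {x : T | x \in ~: Q}) :
  partial_order r -> order_ideal r Q ->
  (forall q p, q \in Q -> p \notin Q -> r q p = r (val aS) p) ->
  good r -> good (subr r (~: Q)).
Proof.
move=> [rr ra rt] iQ pend g.
have aQ : val aS \notin Q by have := valP aS; rewrite inE.
apply: (GEN2 (e := val) (Psi := fun K => val @: K :|: (if aS \in K then Q else set0))) g.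
  move=> K; apply/setP=> x; rewrite !inE mem_imset; last exact: val_inj.
  have xQ : val x \notin Q by have := valP x; rewrite inE.
  by case: (aS \in K); rewrite ?inE ?(negbTE xQ) orbF.
move=> K [iK nK cK].
have aK q : q \in Q -> q \in val @: K :|: (if aS \in K then Q else set0) -> aS \in K.
  move=> qQ; rewrite inE => /orP[/imsetP[q' _ eq]|].
    by have := valP q'; rewrite inE -eq qQ.
  by case: (aS \in K); rewrite ?inE.
have inQ q : q \in Q -> aS \in K -> q \in val @: K :|: (if aS \in K then Q else set0).
  by move=> qQ ->; rewrite inE qQ orbT.
split.
- apply: idealI => x y yP rxy.
  case yQ: (y \in Q).
    apply: inQ; [exact: (idealP iQ yQ rxy) | exact: (aK y yQ yP)].
  move: yP; rewrite inE => /orP[/imsetP[y' y'K ey]|]; last first.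
    by case: (aS \in K); rewrite ?inE ?yQ.
  case xQ: (x \in Q).
    apply: inQ => //; apply: (idealP iK y'K).
    by rewrite /subr -(pend x (val y')) // -ey ?yQ.
  have xS : x \in ~: Q by rewrite inE xQ.
  have -> : x = val (Sub x xS : {x : T | x \in ~: Q}) by [].
  rewrite inE mem_imset; last exact: val_inj.
  by rewrite (idealP iK (x := Sub x xS) y'K) // /subr /= -ey.
- case/set0Pn: nK => x xK; apply/set0Pn; exists (val x); by rewrite inE imset_f.
- set P := val @: K :|: _.
  have toK u : u \in P -> exists2 u', u' \in K & connect (cmpin r P) u (val u').
    move=> uP; case uQ: (u \in Q).
      exists aS; first exact: aK uP.
      apply: connect1; rewrite /cmpin uP (pend u (val aS) uQ aQ) rr /=.
      by rewrite inE imset_f ?(aK u uQ uP).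
    move: uP; rewrite inE => /orP[/imsetP[u' u'K ->]|]; first by exists u'.
    by case: (aS \in K); rewrite ?inE ?uQ.
  have cm x y : x \in K -> y \in K -> connect (cmpin r P) (val x) (val y).
    move=> xK yK; apply: (connect_map (f := val)) (cK _ _ xK yK) => u v /and3P[uK vK ruv].
    by rewrite /cmpin !inE !imset_f.
  move=> u v uP vP; have [u' u'K cu] := toK u uP; have [v' v'K cv] := toK v vP.
  apply: connect_trans cu (connect_trans (cm _ _ u'K v'K) _).
  by rewrite (sym_connect_sym (@cmpin_sym _ r P)).
Qed.

Lemma sum_bij (T : finType) (S1 S2 : {set T}) (h : forall x, (x \in S2) = (x \notin S1))
  (s1 : {x : T | x \in S1}) (s2 : {x : T | x \in S2}) :
  bijective (fun x : {x : T | x \in S1} + {x : T | x \in S2} =>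
               match x with inl y => val y | inr y => val y end).
Proof.
exists (fun t => if t \in S1 then inl (insubd s1 t) else inr (insubd s2 t)).
- case=> y /=.
  + by rewrite (valP y) valKd.
  + have : val y \notin S1 by rewrite -h (valP y).
    by move/negbTE => ->; rewrite valKd.
- move=> t; case tS: (t \in S1) => /=; by rewrite val_insubd /= ?tS // h tS.
Qed.

Lemma fwd_union_split (T : finType) (r : rel T) (S : {set T})
    (s1 : {x : T | x \in S}) (s2 : {x : T | x \in ~: S}) :
  (forall x y, x \in S -> y \notin S -> (r x y = false) /\ (r y x = false)) ->
  fwd (subr r S) -> fwd (subr r (~: S)) -> fwd r.
Proof.
move=> nc f1 f2.
have h : forall x, (x \in ~: S) = (x \notin S) by move=> x; rewrite inE.
apply: (fwd_iso (fwd_union f1 f2) (sum_bij h s1 s2)).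
have nS (y : {x : T | x \in ~: S}) : val y \notin S by rewrite -h (valP y).
move=> [x|x] [y|y] //=.
- by case: (nc _ _ (valP x) (nS y)).
- by case: (nc _ _ (valP y) (nS x)).
Qed.

Lemma fwd_hang_split (T : finType) (r : rel T) (Q : {set T})
    (aS : {x : T | x \in ~: Q}) (q0 : {x : T | x \in Q}) :
  partial_order r -> order_ideal r Q ->
  (forall q p, q \in Q -> p \notin Q -> r q p = r (val aS) p) ->
  fwd (subr r (~: Q)) -> fwd (subr r Q) -> fwd r.
Proof.
move=> po iQ pend f1 f2.
have h : forall x, (x \in Q) = (x \notin ~: Q) by move=> x; rewrite inE negbK.
apply: (fwd_iso (fwd_hang aS f1 f2) (sum_bij h aS q0)).
have nQ (y : {x : T | x \in ~: Q}) : val y \notin Q by have := valP y; rewrite inE.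
move=> x y; rewrite hang_relE; try exact: subr_po.
case: x => x; case: y => y //=.
- apply/negP => rxy; have := idealP iQ (valP y) rxy; by rewrite (negbTE (nQ x)).
- by rewrite (pend _ _ (valP x) (nQ y)).
Qed.

Lemma fwd_dup_split (T : finType) (r : rel T) (m1 m2 : T)
    (d0 : {x : T | x \in ~: [set m1; m2]}) :
  partial_order r -> m1 != m2 ->
  (forall x, r m1 x -> x = m1) -> (forall x, r m2 x -> x = m2) ->
  (forall d, d \in ~: [set m1; m2] -> r d m1 && r d m2) ->
  fwd (subr r (~: [set m1; m2])) -> fwd r.
Proof.
move=> po n12 max1 max2 below f2; have [rr ra rt] := po.
set D := ~: [set m1; m2] in d0 below f2 *.
have vD (d : {x : T | x \in D}) : (val d != m1) && (val d != m2).
  by have := valP d; rewrite !inE negb_or.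
pose f (x : option (unit + {x : T | x \in D})) :=
  match x with None => m2 | Some (inl _) => m1 | Some (inr d) => val d end.
have bij : bijective f.
  exists (fun t => if t == m2 then None else if t == m1 then Some (inl tt)
                   else Some (inr (insubd d0 t))).
  - case=> [[[]|d]|] /=.
    + by rewrite (negbTE n12) eqxx.
    + by case/andP: (vD d) => /negbTE -> /negbTE ->; rewrite valKd.
    + by rewrite eqxx.
  - move=> t; case: (eqVneq t m2) => [->//|n2]; case: (eqVneq t m1) => [->//|n1] /=.
    by rewrite val_insubd /D !inE negb_or n1 n2.
have po1 : partial_order (fun _ _ : unit => true) by split => // [[] []].
have mt : minimal_in (fun _ _ : unit => true) tt by move=> [] _.
apply: (fwd_iso (@fwd_dup _ _ _ _ tt fwd_one f2 mt) bij).
move=> x y; rewrite dup_relE //; last exact: subr_po.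
have n21 : m2 != m1 by rewrite eq_sym.
case: x => [[[]|d]|]; case: y => [[[]|e]|] /=; rewrite ?rr //.
- by apply/negP => /max1 e1; case/andP: (vD e) => /eqP ne _; exact: ne e1.
- by apply/negP => /max1 /eqP; rewrite eq_sym (negbTE n12).
- by case/andP: (below _ (valP d)).
- by case/andP: (below _ (valP d)).
- by apply/negP => /max2 /eqP; rewrite eq_sym (negbTE n21).
- by apply/negP => /max2 e1; case/andP: (vD e) => _ /eqP ne; exact: ne e1.
Qed.

Definition maxl (T : finType) (r : rel T) (m : T) := forall x, r m x -> x = m.

Lemma max_above (T : finType) (r : rel T) : partial_order r ->
  forall x, exists2 m, r x m & maxl r m.
Proof.
case=> rr ra rt x.
case: (arg_minnP (fun z => #|[set w | r z w]|) (rr x)) => m rxm minm.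
exists m => // y rmy; apply/eqP; apply/negPn/negP => nym.
have p : [set w | r y w] \proper [set w | r m w].
  apply/properP; split.
    apply/subsetP => w; rewrite !inE; exact: rt.
  exists m; rewrite !inE ?rr //; apply/negP => rym.
  by move: nym; rewrite (ra y m) ?rym ?rmy ?eqxx.
have := minm y (rt _ _ _ rxm rmy); rewrite leqNgt => /negP; apply.
exact: proper_card p.
Qed.

Lemma princ_cideal (T : finType) (r : rel T) m : partial_order r ->
  cideal r [set y | r y m].
Proof.
case=> rr ra rt; split.
- apply: idealI => x y; rewrite !inE => rym rxy; exact: rt rxy rym.
- by apply/set0Pn; exists m; rewrite inE.
- move=> x y; rewrite !inE => xm ym.
  apply: (connect_trans (y := m)); apply: connect1; by rewrite /cmpin !inE ?xm ?ym rr ?orbT.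
Qed.

Lemma princ_nb (T : finType) (r : rel T) u v z : partial_order r ->
  maxl r u -> maxl r v -> u != v -> r z u -> r z v ->
  nb r [set y | r y u] [set y | r y v].
Proof.
move=> po mu mv nuv zu zv; split; first exact: princ_cideal.
have [rr _ _] := po.
apply/and3P; split.
- by apply/set0Pn; exists z; rewrite !inE zu zv.
- apply/subsetPn; exists u; rewrite !inE ?rr //.
  by apply/negP => /mu e; rewrite e eqxx in nuv.
- apply/subsetPn; exists v; rewrite !inE ?rr //.
  by apply/negP => /mv e; rewrite e eqxx in nuv.
Qed.

Lemma princ_inj (T : finType) (r : rel T) u v : partial_order r ->
  [set y | r y u] = [set y | r y v] -> u = v.
Proof.
case=> rr ra _ E; apply: ra.
have /setP/(_ u) := E; rewrite !inE rr => h1.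
have /setP/(_ v) := E; rewrite !inE rr => h2.
by rewrite -h1 h2.
Qed.

Lemma nbs_eq (T : finType) (r : rel T) u v w x y : partial_order r -> good r ->
  maxl r u -> maxl r v -> maxl r w -> u != v -> u != w ->
  r x u -> r x v -> r y u -> r y w -> v = w.
Proof.
move=> po g mu mv mw nuv nuw xu xv yu yw.
apply: (princ_inj po).
apply: (g [set z | r z u]); first exact: princ_cideal.
- exact: (princ_nb po mu mv nuv xu xv).
- exact: (princ_nb po mu mw nuw yu yw).
Qed.

Lemma below_excl (T : finType) (r : rel T) u v y z : partial_order r -> good r ->
  maxl r u -> maxl r v -> u != v -> (exists2 x, r x u & r x v) ->
  r y u -> y != u -> ~~ r y v -> r z y -> ~~ r z v.
Proof.
move=> po g mu mv nuv [x xu xv] yu nyu nyv zy; have [rr ra rt] := po.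
apply/negP => zv.
have nb1 : nb r [set w | r w v] [set w | r w u].
  by apply: (princ_nb po mv mu _ xv xu); rewrite eq_sym.
have nb2 : nb r [set w | r w v] [set w | r w y].
  split; first exact: princ_cideal.
  apply/and3P; split.
  - by apply/set0Pn; exists z; rewrite !inE zv zy.
  - apply/subsetPn; exists v; rewrite !inE ?rr //.
    apply/negP => vy; have := mv _ (rt _ _ _ vy yu) => e.
    by rewrite e eqxx in nuv.
  - by apply/subsetPn; exists y; rewrite !inE ?rr.
have := g _ _ _ (princ_cideal v po) nb1 nb2 => /(princ_inj po) e.
by rewrite e eqxx in nyu.
Qed.

Lemma neT (T : finType) (S : {set T}) z : z \notin S -> S != setT.
Proof. by move=> h; apply/negP => /eqP e; rewrite e inE in h. Qed.

Lemma pend_case (T : finType) (r : rel T) m1 m2 x :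
  partial_order r -> good r ->
  (forall S : {set T}, S != set0 -> S != setT -> good (subr r S) -> fwd (subr r S)) ->
  maxl r m1 -> maxl r m2 -> m1 != m2 -> r x m1 -> r x m2 ->
  [set y | r y m1 && ~~ r y m2 && (y != m1)] != set0 -> fwd r.
Proof.
move=> po g IHs mu mv n12 x1 x2 nU.
have [rr ra rt] := po.
set U := [set y | _] in nU *.
have m1U : m1 \in ~: U by rewrite !inE eqxx !andbF.
pose aS : {z : T | z \in ~: U} := Sub m1 m1U.
case/set0Pn: (nU) => q0 q0U.
pose qS : {z : T | z \in U} := Sub q0 q0U.
have iU : order_ideal r U.
  apply: idealI => z y; rewrite !inE => /andP[/andP[ym1 nym2] nym1] rzy.
  rewrite (rt _ _ _ rzy ym1) /=.
  rewrite (below_excl po g mu mv n12 (ex_intro2 _ _ x x1 x2) ym1 nym1 nym2 rzy) /=.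
  apply/eqP => ez; rewrite ez in rzy; by rewrite (mu _ rzy) eqxx in nym1.
have pend : forall q p, q \in U -> p \notin U -> r q p = r (val aS) p.
  move=> q p; rewrite !inE => /andP[/andP[qm1 nqm2] nqm1] npU /=.
  apply/idP/idP => [rqp|/mu ->]; last exact: qm1.
  have [m3 pm3 mm3] := max_above po p.
  have qm3 := rt _ _ _ rqp pm3.
  case: (eqVneq m3 m1) => [e31|n31].
    rewrite e31 in pm3.
    move: npU; rewrite pm3 /= negb_and negbK => /orP[pm2|/negPn/eqP ->]; last exact: rr.
    by rewrite (rt _ _ _ rqp pm2) in nqm2.
  case: (eqVneq m3 m2) => [e32|n32].
    by rewrite e32 in qm3; rewrite qm3 in nqm2.
  have := nbs_eq po g mu mv mm3 n12 _ x1 x2 qm1 qm3.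
  by rewrite eq_sym n31 => /(_ isT) e; rewrite e eqxx in n32.
apply: (fwd_hang_split (aS := aS) qS po iU pend).
- apply: IHs.
  + by apply/set0Pn; exists m1.
  + by apply: (neT (z := q0)); rewrite inE negbK.
  + exact: good_sub_pend po iU pend g.
- apply: IHs => //.
  + by apply: (neT (z := m1)); move: (m1U); rewrite inE.
  + exact: good_sub_down po iU g.
Qed.

Lemma good_fwd n : forall (T : finType) (r : rel T),
  #|T| <= n -> partial_order r -> 0 < #|T| -> good r -> fwd r.
Proof.
elim: n => [|n IH] T r cT po nT g.
  by rewrite leqn0 in cT; rewrite (eqP cT) in nT.
have [rr ra rt] := po.
have IHs (S : {set T}) : S != set0 -> S != setT -> good (subr r S) -> fwd (subr r S).
  move=> n0 nT' gS; apply: IH => //; try exact: subr_po.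
  - rewrite card_subS -ltnS; apply: leq_trans cT; rewrite -cardsT; apply: proper_card.
    by rewrite properT.
  - by rewrite card_subS card_gt0.
case/card_gt0P: (nT) => x0 _.
case: (leqP #|T| 1) => [c1|c2].
  have all_eq t : t = x0 by move/card_le1_eqP: c1 => H; exact: H.
  apply: (fwd_iso (f := fun _ : unit => x0) fwd_one).
    by exists (fun _ => tt); [case | move=> t /=; rewrite -(all_eq t)].
  by move=> [] [] /=; rewrite rr.
case: (boolP [exists S : {set T}, [&& S != set0, S != setT &
          [forall x, forall y, r x y ==> ((x \in S) == (y \in S))]]]).
  case/existsP => S /and3P[n0 nT' /forallP ud].
  have udP x y : r x y -> (x \in S) = (y \in S).
    by move=> rxy; have /forallP/(_ y)/implyP/(_ rxy)/eqP := ud x.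
  case/set0Pn: (n0) => s1 s1S.
  have [s2 s2S] : exists s2, s2 \in ~: S.
    apply/set0Pn; apply/negP => /eqP e; move: nT'.
    by rewrite -(setCK S) e setC0 eqxx.
  have s2n : s2 \notin S by rewrite inE in s2S.
  apply: (fwd_union_split (Sub s1 s1S) (Sub s2 s2S)).
  - move=> x y xS yS; split; apply/negP => /udP; rewrite ?xS (negbTE yS) //.
  - apply: IHs => //; apply: good_sub_down po _ g.
    by apply: idealI => x y yS /udP ->.
  - apply: IHs.
    + by apply/set0Pn; exists s2.
    + by apply: (neT (z := s1)); rewrite inE s1S.
    + apply: good_sub_down po _ g.
      by apply: idealI => x y; rewrite !inE => yS /udP ->.
rewrite negb_exists => /forallP nsplit.
have nsp (S : {set T}) : S != set0 -> S != setT ->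
    (forall x y, r x y -> (x \in S) = (y \in S)) -> False.
  move=> a b c; have := nsplit S; rewrite a b /= => /negP; apply.
  apply/forallP => x; apply/forallP => y; apply/implyP => /c ->; exact: eqxx.
have [m1 _ mu] := max_above po x0.
have [q0 nq0] : exists q, q != m1.
  case: (boolP [exists q, q != m1]) => [/existsP[q nq]|]; first by exists q.
  rewrite negb_exists => /forallP H; move: c2; rewrite ltnNge => /negP; case.
  apply/card_le1_eqP => u v _ _; have := H u; have := H v; rewrite !negbK => /eqP -> /eqP ->.
  by [].
case: (boolP [forall x, forall y, (r x m1) && r x y ==> r y m1]) => [/forallP upc|].
  have allb y : r y m1.
    case: (boolP [forall y, r y m1]) => [/forallP//|].
    rewrite negb_forall => /existsP[z nz]; exfalso.
    apply: (nsp [set y | r y m1]).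
    - by apply/set0Pn; exists m1; rewrite inE.
    - by apply: (neT (z := z)); rewrite inE.
    - move=> u v ruv; rewrite !inE; apply/idP/idP => [um|vm]; last exact: rt ruv vm.
      by have /forallP/(_ v)/implyP := upc u; apply; rewrite um.
  set Q := ~: [set m1].
  have m1Q : m1 \in ~: Q by rewrite /Q setCK inE.
  have q0Q : q0 \in Q by rewrite /Q !inE.
  have iQ : order_ideal r Q.
    apply: idealI => u v; rewrite /Q !inE => nv ruv; apply/negP => /eqP eu.
    by rewrite eu in ruv; rewrite (mu _ ruv) eqxx in nv.
  have pend : forall q p, q \in Q -> p \notin Q -> r q p = r (val (Sub m1 m1Q : {x | x \in ~: Q})) p.
    move=> q p _; rewrite /Q !inE negbK => /eqP -> /=; by rewrite allb rr.
  apply: (fwd_hang_split (Sub q0 q0Q) po iQ pend).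
  - apply: IHs.
    + by apply/set0Pn; exists m1.
    + by apply: (neT (z := q0)); rewrite /Q !inE negbK.
    + exact: good_sub_pend po iQ pend g.
  - apply: IHs.
    + by apply/set0Pn; exists q0.
    + by apply: (neT (z := m1)); rewrite /Q !inE negbK.
    + exact: good_sub_down po iQ g.
rewrite negb_forall => /existsP[x]; rewrite negb_forall => /existsP[y].
rewrite negb_imply => /andP[/andP[x1 rxy] ny1].
have [m2 ym2 mv] := max_above po y.
have n12 : m1 != m2 by apply/eqP => e; rewrite -e in ym2; rewrite ym2 in ny1.
have x2 : r x m2 := rt _ _ _ rxy ym2.
case: (boolP ([set y | r y m1 && ~~ r y m2 && (y != m1)] != set0)) => [nU1|].
  exact: (pend_case po g IHs mu mv n12 x1 x2 nU1).
rewrite negbK => /eqP U1e.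
have n21 : m2 != m1 by rewrite eq_sym.
case: (boolP ([set y | r y m2 && ~~ r y m1 && (y != m2)] != set0)) => [nU2|].
  exact: (pend_case po g IHs mv mu n21 x2 x1 nU2).
rewrite negbK => /eqP U2e.
have U1 d : r d m1 -> d != m1 -> r d m2.
  move=> d1 nd; have /setP/(_ d) := U1e; rewrite !inE d1 nd andbT /=.
  by move/negbFE.
have U2 d : r d m2 -> d != m2 -> r d m1.
  move=> d2 nd; have /setP/(_ d) := U2e; rewrite !inE d2 nd andbT /=.
  by move/negbFE.
have K2 m3 z : maxl r m3 -> m3 != m1 -> m3 != m2 -> r z m3 -> ~~ (r z m1 || r z m2).
  move=> mm3 n31 n32 z3; apply/negP => /orP[z1|z2].
    have := nbs_eq po g mu mv mm3 n12 _ x1 x2 z1 z3.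
    by rewrite eq_sym n31 => /(_ isT) e; rewrite e eqxx in n32.
  have := nbs_eq po g mv mu mm3 n21 _ x2 x1 z2 z3.
  by rewrite eq_sym n32 => /(_ isT) e; rewrite e eqxx in n31.
set D := ~: [set m1; m2].
have below d : d \in D -> r d m1 && r d m2.
  rewrite !inE negb_or => /andP[nd1 nd2].
  have [m3 dm3 mm3] := max_above po d.
  case: (eqVneq m3 m1) => [e1|n31].
    by rewrite e1 in dm3; rewrite dm3 (U1 d dm3 nd1).
  case: (eqVneq m3 m2) => [e2|n32].
    by rewrite e2 in dm3; rewrite dm3 (U2 d dm3 nd2).
  exfalso; apply: (nsp [set y | r y m1 || r y m2]).
  - by apply/set0Pn; exists m1; rewrite inE rr.
  - apply: (neT (z := m3)); rewrite inE; apply/negP => /orP[/mm3 e|/mm3 e].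
      by rewrite e eqxx in n31.
    by rewrite e eqxx in n32.
  - move=> u v ruv; rewrite !inE; apply/idP/idP => [/orP[u1|u2]|/orP[v1|v2]].
    + have [m4 vm4 mm4] := max_above po v.
      case: (eqVneq m4 m1) => [e1|n41]; first by rewrite -e1 vm4.
      case: (eqVneq m4 m2) => [e2|n42]; first by rewrite -e2 vm4 orbT.
      by have := K2 m4 u mm4 n41 n42 (rt _ _ _ ruv vm4); rewrite u1.
    + have [m4 vm4 mm4] := max_above po v.
      case: (eqVneq m4 m1) => [e1|n41]; first by rewrite -e1 vm4.
      case: (eqVneq m4 m2) => [e2|n42]; first by rewrite -e2 vm4 orbT.
      by have := K2 m4 u mm4 n41 n42 (rt _ _ _ ruv vm4); rewrite u2 orbT.
    + by rewrite (rt _ _ _ ruv v1).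
    + by rewrite (rt _ _ _ ruv v2) orbT.
have xD : x \in D.
  rewrite !inE negb_or; apply/andP; split; apply/eqP => e.
    by rewrite e in x2; rewrite (mu _ x2) eqxx in n12.
  by rewrite e in x1; rewrite (mv _ x1) eqxx in n21.
apply: (fwd_dup_split (Sub x xD) po n12 mu mv below).
apply: IHs.
- by apply/set0Pn; exists x.
- by apply: (neT (z := m1)); rewrite !inE eqxx.
- apply: good_sub_down po _ g.
  apply: idealI => u v; rewrite !inE !negb_or => /andP[nv1 nv2] ruv.
  apply/andP; split; apply/eqP => e; rewrite e in ruv.
    by rewrite (mu _ ruv) eqxx in nv1.
  by rewrite (mv _ ruv) eqxx in nv2.
Qed.

Theorem proposition2p3 (T : finType) (r : rel T) :
  partial_order r -> 0 < #|T| ->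
  (fwd r <-> forall J : {set T}, conn_ideal r J -> #|gamma_nbrs r J| <= 1).
Proof.
move=> po nT; split.
- by case/fwd_good => po' g _; apply/(goodE po').
- by move/(goodE po) => g; exact: (@good_fwd #|T| T r (leqnn _) po nT g).
Qed.
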